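(* Let $\mathcal{C}$ be a binary linear $[n,k,d]$ code, let $2\le\ell\le\lfloor (d+1)/2\rfloor$, let $0<\epsilon<1$, and put $N=\sum_{j=1}^{\ell-1}\binom{n}{j}$. Suppose $m$ is a positive integer with $$m\;\ge\;\frac{\ln\frac{\epsilon}{N}+\left(\sum_{j=1}^{\ell-1}\left[\binom{n}{j}-\binom{n-j}{j}-1\right]\right)\ln\left(1-\frac{\epsilon}{N}\right)}{\ln\left(1-\frac{\ell-1}{2^{\ell-1}}\right)}.$$ Let $\mathbf{H}$ be the random $m\times n$ matrix whose rows are chosen independently and uniformly at random (with replacement) from the $2^{n-k}$ codewords of $\mathcal{C}^{\perp}$. Then with probability at least $1-\epsilon$, $\mathbf{H}$ has stopping distance at least $\ell$. Moreover, by adjoining at most $n-k-\ell+1$ further codewords of $\mathcal{C}^\perp$ as rows, such a matrix can be extended to a matrix of rank $n-k$, i.e.\ to a parity-check matrix of $\mathcal{C}$ with stopping distance at least $\ell$.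
   Context: For a binary matrix with columns indexed by $\{0,\ldots,n-1\}$, a row resolves a nonempty column set $I$ if its restriction to $I$ has Hamming weight exactly one; $I$ is a stopping set if no row resolves it; the stopping distance is the minimum size of a stopping set (so stopping distance at least $\ell$ means no stopping set of size at most $\ell-1$). A parity-check matrix of $\mathcal{C}$ is a binary matrix whose row space equals $\mathcal{C}^\perp$. $\ln$ denotes the natural logarithm and $\binom{a}{b}=0$ for $b>a$. *)

(* Defs.v *)
From Stdlib Require Import Reals.
From HB Require Import structures.
From mathcomp Require Import all_boot all_order all_algebra.
Set Implicit Arguments. Unset Strict Implicit. Unset Printing Implicit Defensive.
Import GRing.Theory.

Local Open Scope ring_scope.

Definition wt n (v : 'rV['F_2]_n) : nat := #|[set j : 'I_n | v 0 j != 0]|.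

(* A binary linear [n,k,d] code: a set of vectors of F_2^n closed under
   addition (hence an F_2-subspace), of size 2^k, with minimum nonzero
   weight exactly d. *)
Definition is_code n (C : {set 'rV['F_2]_n}) (k d : nat) : Prop :=
  [/\ (0 : 'rV['F_2]_n) \in C,
      (forall x y, x \in C -> y \in C -> x + y \in C),
      #|C| = (2 ^ k)%N,
      (exists2 c, c \in C & c != 0 /\ wt c = d) &
      (forall c, c \in C -> c != 0 -> (d <= wt c)%N)].

Definition dual n (C : {set 'rV['F_2]_n}) : {set 'rV['F_2]_n} :=
  [set x : 'rV['F_2]_n | [forall c in C, (x *m c^T) 0 0 == 0]].

Definition resolves m n (H : 'M['F_2]_(m, n)) (I : {set 'I_n}) : bool :=
  [exists i : 'I_m, #|[set j in I | H i j != 0]| == 1%N].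

Definition stopping_set m n (H : 'M['F_2]_(m, n)) (I : {set 'I_n}) : bool :=
  (I != set0) && ~~ resolves H I.

Definition stop_dist_ge m n (H : 'M['F_2]_(m, n)) (l : nat) : bool :=
  [forall I : {set 'I_n}, stopping_set H I ==> (l <= #|I|)%N].

Definition rows_in m n (D : {set 'rV['F_2]_n}) (H : 'M['F_2]_(m, n)) : bool :=
  [forall i : 'I_m, row i H \in D].

Definition parity_check m n (C : {set 'rV['F_2]_n}) (H : 'M['F_2]_(m, n)) : Prop :=
  forall v : 'rV['F_2]_n, (v <= H)%MS = (v \in dual C).

(* Number of matrices with rows in C^perp and stopping distance >= l;
   the probability is this divided by #|C^perp|^m (uniform independent rows). *)
Definition good_count m n (C : {set 'rV['F_2]_n}) (l : nat) : nat :=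
  #|[set H : 'M['F_2]_(m, n) | rows_in (dual C) H && stop_dist_ge H l]|.

Definition rsum (a b : nat) (f : nat -> R) : R := \big[Rplus/R0]_(a <= j < b) f j.

(* Main.v *)
Require Import Defs.
From Stdlib Require Import Reals Lra Lia.
From HB Require Import structures.
From mathcomp Require Import all_boot all_order all_algebra.
Set Implicit Arguments. Unset Strict Implicit. Unset Printing Implicit Defensive.
Import GRing.Theory.

Section LinAlg.
Local Open Scope ring_scope.

Lemma F2_cases (x : 'F_2) : x = 0 \/ x = 1.
Proof.
case: x => [[|[|i]]] Hi; [left|right|]; try by apply/val_inj.
by [].
Qed.

Lemma F2_one_neq0 : (1 : 'F_2) != 0.
Proof. by []. Qed.

Lemma card_F2 : #|'F_2| = 2%N.
Proof. by rewrite card_Fp. Qed.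

Lemma card_rowsp n m (A : 'M['F_2]_(m, n)) :
  #|[set u : 'rV['F_2]_n | (u <= A)%MS]| = (2 ^ \rank A)%N.
Proof.
transitivity (#|'F_2| ^ \rank A)%N; last by rewrite card_F2.
rewrite -[\rank A]mul1n -card_mx.
have injA: injective (mulmxr (row_base A)).
  have /row_freeP[A' A'K] := row_base_free A.
  by move=> ?; apply: can_inj (mulmxr A') _ => u; rewrite /= -mulmxA A'K mulmx1.
rewrite -(card_image (injA _)); apply: eq_card => v.
by rewrite inE -(eq_row_base A) (sameP submxP codomP).
Qed.

End LinAlg.

Section CodeSetup.
Local Open Scope ring_scope.
Variables (n k d : nat) (C : {set 'rV['F_2]_n}).
Hypothesis code : is_code C k d.

Definition Amat : 'M['F_2]_(#|C|, n) := \matrix_(i < #|C|) (enum_val i : 'rV_n).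

Lemma row_Amat i : row i Amat = enum_val i.
Proof. by rewrite rowK. Qed.

Lemma C_sub_A c : c \in C -> (c <= Amat)%MS.
Proof.
move=> Cc; rewrite (eq_row_sub (enum_rank_in Cc c)) //.
by rewrite row_Amat enum_rankK_in.
Qed.

Lemma A_sub_C u : (u <= Amat)%MS -> u \in C.
Proof.
case: code => C0 Cadd _ _ _.
case/submxP=> w ->; rewrite mulmx_sum_row.
apply: (big_ind (fun x => x \in C)) => //.
move=> i _; rewrite row_Amat; have [->|->] := F2_cases (w 0 i).
  by rewrite scale0r.
by rewrite scale1r enum_valP.
Qed.

Lemma rank_Amat : \rank Amat = k.
Proof.
case: code => _ _ cardC _ _.
apply/eqP; rewrite -(eqn_exp2l _ _ (ltnSn 1)) -card_rowsp -cardC; apply/eqP.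
by apply: eq_card => u; rewrite inE; apply/idP/idP; [apply: A_sub_C|apply: C_sub_A].
Qed.

Lemma entry_xAT (x : 'rV['F_2]_n) (i : 'I_#|C|) : (x *m Amat^T) 0 i = (x *m (enum_val i)^T) 0 0.
Proof.
have -> : (x *m Amat^T) 0 i = (col i (x *m Amat^T)) 0 0 by rewrite [RHS]mxE.
by rewrite colE -mulmxA -colE -tr_row row_Amat.
Qed.

Lemma dual_A (x : 'rV['F_2]_n) : (x \in dual C) = (x *m Amat^T == 0).
Proof.
rewrite inE; apply/forall_inP/eqP => [H|H c Cc].
  by apply/rowP => i; rewrite entry_xAT (eqP (H _ (enum_valP i))) mxE.
have := entry_xAT x (enum_rank_in Cc c); rewrite enum_rankK_in // => <-.
by rewrite H mxE.
Qed.

Definition Bmat : 'M['F_2]_n := kermx Amat^T.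

Lemma dual_B (x : 'rV['F_2]_n) : (x \in dual C) = (x <= Bmat)%MS.
Proof. by rewrite dual_A sub_kermx. Qed.

Lemma k_le_n : (k <= n)%N.
Proof. by rewrite -rank_Amat rank_leq_col. Qed.

Lemma rank_Bmat : \rank Bmat = (n - k)%N.
Proof. by rewrite /Bmat mxrank_ker mxrank_tr rank_Amat. Qed.

Lemma card_dual : #|dual C| = (2 ^ (n - k))%N.
Proof.
rewrite -rank_Bmat -card_rowsp; apply: eq_card => x.
by rewrite [RHS]inE dual_B.
Qed.

Lemma double_dual (y : 'rV['F_2]_n) : y *m Bmat^T = 0 -> y \in C.
Proof.
move=> Hy; apply: A_sub_C.
have sAK : (Amat <= kermx Bmat^T)%MS.
  rewrite sub_kermx -[Amat]trmxK -trmx_mul /Bmat mulmx_ker trmx0 //.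
have rK : \rank (kermx Bmat^T) = \rank Amat.
  by rewrite mxrank_ker mxrank_tr rank_Bmat rank_Amat subKn // k_le_n.
have /eqmxP eqAK : (Amat == kermx Bmat^T)%MS.
  by rewrite -(mxrank_leqif_eq sAK) rK.
by rewrite eqAK; apply/sub_kermxP.
Qed.

End CodeSetup.

Section Sel.
Local Open Scope ring_scope.
Variables (n : nat) (I : {set 'I_n}).

Definition Psel : 'M['F_2]_(n, #|I|) := \matrix_(t, s) ((t == enum_val s)%:R).

Lemma xP_entry (x : 'rV['F_2]_n) s : (x *m Psel) 0 s = x 0 (enum_val s).
Proof.
rewrite mxE (bigD1 (enum_val s)) //= mxE eqxx mulr1 big1 ?addr0 // => t /negbTE.
by rewrite mxE => ->; rewrite mulr0.
Qed.

Lemma yPT_ev (y : 'rV['F_2]_#|I|) s : (y *m Psel^T) 0 (enum_val s) = y 0 s.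
Proof.
rewrite mxE (bigD1 s) //= !mxE eqxx mulr1 big1 ?addr0 // => t /negbTE ts.
rewrite !mxE (inj_eq enum_val_inj) eq_sym ts mulr0 //.
Qed.

Lemma yPT_out (y : 'rV['F_2]_#|I|) t : t \notin I -> (y *m Psel^T) 0 t = 0.
Proof.
move=> tI; rewrite mxE big1 // => s _; rewrite !mxE.
have -> : (t == enum_val s) = false.
  by apply/negbTE; apply: contra tI => /eqP ->; apply: enum_valP.
by rewrite mulr0.
Qed.

Lemma yPTP (y : 'rV['F_2]_#|I|) : y *m Psel^T *m Psel = y.
Proof. by apply/rowP => s; rewrite xP_entry yPT_ev. Qed.

Lemma wt_yPT (y : 'rV['F_2]_#|I|) : (wt (y *m Psel^T) <= #|I|)%N.
Proof.
apply: subset_leq_card; apply/subsetP => t; rewrite inE.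
by apply: contraR => tI; rewrite yPT_out // eqxx.
Qed.

Lemma wt_res (x : 'rV['F_2]_n) :
  #|[set t in I | x 0 t != 0]| = wt (x *m Psel).
Proof.
rewrite /wt -(card_imset _ enum_val_inj); apply: eq_card => t.
rewrite inE; apply/andP/imsetP => [[It xt]|[s]].
  exists (enum_rank_in It t); last by rewrite enum_rankK_in.
  by rewrite inE xP_entry enum_rankK_in.
by rewrite inE xP_entry => xs ->; split => //; apply: enum_valP.
Qed.

End Sel.

Section Key.
Local Open Scope ring_scope.
Variables (n k d : nat) (C : {set 'rV['F_2]_n}).
Hypothesis code : is_code C k d.
Variable I : {set 'I_n}.
Hypothesis HId : (#|I| < d)%N.

Lemma nonzero_row p q (M : 'M['F_2]_(p, q)) : (0 < \rank M)%N ->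
  exists i, row i M != 0.
Proof.
move=> rM; apply/existsP; apply: contraLR rM; rewrite negb_exists => /forallP H.
have -> : M = 0 by apply/row_matrixP => i; rewrite row0; apply/eqP; apply: negbNE.
by rewrite mxrank0.
Qed.

Lemma full_BP : row_full (Bmat C *m Psel I).
Proof.
rewrite /row_full; apply: contraT => Hne.
have Hlt : (\rank (Bmat C *m Psel I) < #|I|)%N.
  by rewrite ltn_neqAle Hne rank_leq_col.
have rK : (0 < \rank (kermx (Bmat C *m Psel I)^T))%N.
  by rewrite mxrank_ker mxrank_tr subn_gt0.
have [i Hi] := nonzero_row rK.
set y := row i _ in Hi.
have Hy : y *m (Bmat C *m Psel I)^T = 0 by apply/sub_kermxP; apply: row_sub.
have Cy : y *m (Psel I)^T \in C.
  by apply: (double_dual code); rewrite -mulmxA -trmx_mul.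
have nz : y *m (Psel I)^T != 0.
  by apply: contra Hi => /eqP H0; rewrite -(yPTP y) H0 mul0mx.
case: code => _ _ _ _ /(_ _ Cy nz) Hd.
by have := leq_trans Hd (wt_yPT y); rewrite leqNgt HId.
Qed.

Definition fib (z : 'rV['F_2]_#|I|) := [set x in dual C | x *m Psel I == z].
Definition Ker := fib 0.

Lemma in_fib x z : (x \in fib z) = (x \in dual C) && (x *m Psel I == z).
Proof. by rewrite /fib in_set. Qed.

Lemma dual_add x y : x \in dual C -> y \in dual C -> x + y \in dual C.
Proof. by rewrite !dual_B //; apply: addmx_sub. Qed.

Lemma dual_sub x y : x \in dual C -> y \in dual C -> x - y \in dual C.
Proof. by rewrite !dual_B // => Hx Hy; apply: addmx_sub => //; rewrite eqmx_opp. Qed.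

Lemma card_fib z : #|fib z| = #|Ker|.
Proof.
have := submx_full z full_BP; case/submxP => w Hz.
set x0 := w *m Bmat C.
have Dx0 : x0 \in dual C by rewrite dual_B // submxMl.
have Px0 : x0 *m Psel I = z by rewrite Hz mulmxA.
have -> : fib z = [set x0 + y | y in Ker].
  apply/setP => x; rewrite in_fib; apply/andP/imsetP => [[Dx /eqP Px]|[y]].
    exists (x - x0); last by rewrite addrC subrK.
    by rewrite /Ker in_fib dual_sub //= mulmxBl Px Px0 subrr.
  rewrite /Ker in_fib => /andP[Dy /eqP Py] ->; split; first exact: dual_add.
  by rewrite mulmxDl Py Px0 addr0.
by rewrite card_imset //; apply: addrI.
Qed.

Lemma card_D_fib : #|dual C| = (2 ^ #|I| * #|Ker|)%N.
Proof.
rewrite -sum1_card (partition_big (fun x => x *m Psel I) xpredT) //=.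
rewrite (eq_bigr (fun _ => #|Ker|)); last first.
  by move=> z _; rewrite -(card_fib z) -sum1_card; apply: eq_bigl => x; rewrite in_fib.
rewrite sum_nat_const cardT -cardE card_mx card_F2 mul1n //.
Qed.

Definition W1 := [set x in dual C | #|[set t in I | x 0 t != 0]| == 1%N].

Lemma card_W1_fib : (#|I| * #|Ker| <= #|W1|)%N.
Proof.
rewrite -[#|W1|]sum1_card (partition_big (fun x => x *m Psel I) (fun z => wt z == 1%N)) /=;
  last by move=> x; rewrite /W1 in_set wt_res => /andP[].
rewrite (eq_bigr (fun _ => #|Ker|)); last first.
  move=> z Hz; rewrite -(card_fib z) -sum1_card; apply: eq_bigl => x.
  rewrite in_fib /W1 in_set wt_res; case: (x \in dual C) => //=.
  by case: (x *m Psel I =P z) => [->|_]; rewrite ?Hz ?andbF.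
have -> : (\sum_(i : 'rV['F_2]_#|I| | wt i == 1%N) #|Ker|
          = #|[set z : 'rV['F_2]_#|I| | wt z == 1%N]| * #|Ker|)%N.
  by rewrite -sum_nat_const; apply: eq_bigl => z; rewrite inE.
rewrite leq_mul2r; apply/orP; right.
rewrite -[X in (X <= _)%N]card_ord -cardsT.
have b2 (b : bool) : ((b%:R : 'F_2) != 0) = b by case: b.
have dinj : injective (fun s : 'I_#|I| => (delta_mx 0 s : 'rV['F_2]_#|I|)).
  move=> s t /(congr1 (fun M : 'rV['F_2]_#|I| => M 0 s)) /eqP.
  rewrite !mxE !eqxx /= eq_sym; case: (s =P t) => // _.
rewrite -(card_imset [set: 'I_#|I|] dinj).
apply: subset_leq_card; apply/subsetP => z /imsetP[s _ ->]; rewrite inE.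
rewrite /wt (_ : [set j | _] = [set s]) ?cards1 //.
by apply/setP => j; rewrite !inE mxE b2.
Qed.

Lemma key_count : (#|I| * #|dual C| <= 2 ^ #|I| * #|W1|)%N.
Proof. by rewrite card_D_fib mulnCA leq_mul2l card_W1_fib orbT. Qed.

Lemma W1_sub : W1 \subset dual C.
Proof. by apply/subsetP => x; rewrite /W1 in_set => /andP[]. Qed.

End Key.

Section Count.
Local Open Scope ring_scope.

Lemma card_rows m n (S : {set 'rV['F_2]_n}) :
  #|[set H : 'M['F_2]_(m, n) | [forall i, row i H \in S]]| = (#|S| ^ m)%N.
Proof.
rewrite -[m in RHS]card_ord -card_ffun_on.
pose g (f : {ffun 'I_m -> 'rV['F_2]_n}) : 'M['F_2]_(m, n) := \matrix_(i < m) f i.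
have ginj : injective g.
  move=> f1 f2 /(congr1 (fun M => fun i => row i M)) H.
  by apply/ffunP => i; have := congr1 (fun F => F i) H; rewrite /= !rowK.
rewrite -(card_imset (ffun_on S) ginj); apply: eq_card => H.
rewrite inE; apply/forallP/imsetP => [HS|[f /ffun_onP fS ->] i].
  exists [ffun i => row i H]; first by apply/ffun_onP => i; rewrite ffunE.
  by apply/row_matrixP => i; rewrite rowK ffunE.
by rewrite rowK.
Qed.

End Count.

Section Arith.

Lemma pow_ratio j L : (1 <= j)%N -> (j <= L)%N -> (L * 2 ^ j <= j * 2 ^ L)%N.
Proof.
move=> j1; elim: L => [|L IH]; first by rewrite leqn0 => /eqP ->.
rewrite leq_eqVlt => /orP[/eqP <-|]; first by rewrite mulnC.
rewrite ltnS => jL; have L1 : (1 <= L)%N := leq_trans j1 jL.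
move: (IH jL); rewrite expnS; move: (2 ^ j) (2 ^ L) => P Q H.
move/leP: H; move/leP: L1 => L1 H; apply/leP.
rewrite -!multE in H *; nia.
Qed.

Lemma arith_main a w j L : (1 <= j)%N -> (j <= L)%N -> (j * a <= 2 ^ j * w)%N ->
  (w <= a)%N -> (2 ^ L * (a - w) <= (2 ^ L - L) * a)%N.
Proof.
move=> j1 jL Hja wa.
have HP := pow_ratio j1 jL.
have HLa : (L * a <= 2 ^ L * w)%N.
  have pj : (0 < 2 ^ j)%N by rewrite expn_gt0.
  rewrite -(leq_pmul2l pj).
  move: HP Hja pj; move: (2 ^ j) (2 ^ L) => P Q.
  move=> /leP HP /leP Hja _; apply/leP; rewrite -!multE in HP Hja *.
  have H1 : (L * P * a <= j * Q * a)%coq_nat by apply: Nat.mul_le_mono_r.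
  have H2 : (Q * (j * a) <= Q * (P * w))%coq_nat by apply: Nat.mul_le_mono_l.
  nia.
rewrite mulnBr mulnBl [(L * a)%N]mulnC [(2 ^ L * a)%N]mulnC.
by apply: leq_sub2l; rewrite mulnC.
Qed.

End Arith.

Section Union.

Lemma card_bigcup_le (T J : finType) (S : {pred J}) (F : J -> {set T}) :
  (#|\bigcup_(i in S) F i| <= \sum_(i in S) #|F i|)%N.
Proof.
apply: (big_ind2 (fun (A : {set T}) (x : nat) => #|A| <= x)%N).
- by rewrite cards0.
- move=> A1 x1 A2 x2 H1 H2; apply: leq_trans (leq_card_setU A1 A2) _.
  exact: leq_add.
- by [].
Qed.

Lemma card_small_sets n l :
  #|[set I : {set 'I_n} | (0 < #|I|) && (#|I| < l)]| = (\sum_(1 <= j < l) 'C(n, j))%N.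
Proof.
elim: l => [|l IH].
  rewrite big_geq // (_ : [set I | _] = set0) ?cards0 //.
  by apply/setP => I; rewrite !inE ltn0 andbF.
case: l IH => [|l] IH.
  rewrite big_geq // (_ : [set I | _] = set0) ?cards0 //.
  by apply/setP => I; rewrite !inE ltnS leqn0 lt0n; case: (_ == _).
rewrite big_nat_recr //= -IH.
rewrite (_ : [set I | _] = [set I : {set 'I_n} | (0 < #|I|) && (#|I| < l.+1)]
                          :|: [set I : {set 'I_n} | #|I| == l.+1]); last first.
  apply/setP => I; rewrite !inE; move: #|I| => x.
  by case: x => [|x] //=; rewrite !ltnS eqSS leq_eqVlt orbC.
rewrite cardsU card_draws card_ord (_ : _ :&: _ = set0) ?cards0 ?subn0 //.
apply/setP => I; rewrite !inE; case: eqP => [->|]; rewrite ?ltnn ?andbF //.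
Qed.

End Union.

Section Bad.
Local Open Scope ring_scope.
Variables (n k d : nat) (C : {set 'rV['F_2]_n}).
Hypothesis code : is_code C k d.
Variables (l m : nat).
Hypothesis Hl : (2 <= l)%N.
Hypothesis Hld : (l - 1 < d)%N.
Hypothesis Hm : (0 < m)%N.

Definition bad := [set H : 'M['F_2]_(m, n) | rows_in (dual C) H && ~~ stop_dist_ge H l].
Definition BadI (I : {set 'I_n}) :=
  [set H : 'M['F_2]_(m, n) | [forall i, row i H \in dual C :\: W1 C I]].
Definition Sm := [set I : {set 'I_n} | (0 < #|I|)%N && (#|I| < l)%N].

Lemma bad_sub : bad \subset \bigcup_(I in Sm) BadI I.
Proof.
apply/subsetP => H; rewrite inE => /andP[/forallP rH].
case/forallPn => I; rewrite negb_imply => /andP[/andP[I0 nres] lI].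
apply/bigcupP; exists I.
  by rewrite inE card_gt0 I0 ltnNge.
rewrite inE; apply/forallP => i; rewrite in_setD rH andbT /W1 in_set rH /=.
move: nres; rewrite /resolves negb_exists => /forallP /(_ i).
rewrite (_ : [set t in I | row i H 0 t != 0] = [set j in I | H i j != 0]) //.
by apply/setP => t; rewrite !inE mxE.
Qed.

Lemma BadI_card I : I \in Sm ->
  ((2 ^ (l - 1)) ^ m * #|BadI I| <= ((2 ^ (l - 1) - (l - 1)) * #|dual C|) ^ m)%N.
Proof.
rewrite inE => /andP[I0 Il].
have jL : (#|I| <= l - 1)%N by rewrite leq_subRL ?add1n // ltnW.
have HId : (#|I| < d)%N by apply: leq_ltn_trans jL Hld.
rewrite /BadI card_rows cardsD (setIidPr (W1_sub C I)) -expnMn leq_exp2r //.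
apply: (@arith_main _ _ #|I|) => //.
  by have := key_count code HId.
have := subset_leq_card (W1_sub C I); by [].
Qed.

Lemma bad_bound :
  ((2 ^ (l - 1)) ^ m * #|bad| <=
   (\sum_(1 <= j < l) 'C(n, j)) * ((2 ^ (l - 1) - (l - 1)) * #|dual C|) ^ m)%N.
Proof.
rewrite -card_small_sets -/Sm.
apply: (@leq_trans ((2 ^ (l - 1)) ^ m * \sum_(I in Sm) #|BadI I|)).
  by rewrite leq_mul2l; apply/orP; right;
     apply: leq_trans (subset_leq_card bad_sub) (card_bigcup_le _ _).
rewrite big_distrr /= -sum_nat_const; apply: leq_sum => I; exact: BadI_card.
Qed.

End Bad.

Section Ext.
Local Open Scope ring_scope.

Lemma F2_sum p (f : 'I_p -> 'F_2) : \sum_t f t = (#|[set t | f t != 0]|)%:R.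
Proof.
rewrite -sum1_card natr_sum [RHS]big_mkcond /=; apply: eq_bigr => t _.
by rewrite inE; have [->|->] := F2_cases (f t).
Qed.

Lemma rank_stop m n l (H : 'M['F_2]_(m, n)) : (0 < l)%N -> stop_dist_ge H l -> (l - 1 <= n)%N ->
  (l - 1 <= \rank H)%N.
Proof.
move=> l0 sH ln.
have : (0 < #|[set A : {set 'I_n} | #|A| == (l - 1)%N]|)%N.
  by rewrite card_draws card_ord bin_gt0.
case/card_gt0P => I; rewrite inE => /eqP HI.
rewrite -HI; apply: leq_trans (mxrankM_maxl H (Psel I)).
rewrite leqNgt; apply/negP => Hlt.
have rK : (0 < \rank (kermx (H *m Psel I)^T))%N.
  by rewrite mxrank_ker mxrank_tr subn_gt0.
have [i Hi] := nonzero_row rK.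
set y := row i _ in Hi.
have Hy : y *m (H *m Psel I)^T = 0 by apply/sub_kermxP; apply: row_sub.
set v := y *m (Psel I)^T.
have vH : v *m H^T = 0 by rewrite /v -mulmxA -trmx_mul.
have nz : v != 0.
  by apply: contra Hi => /eqP H0; rewrite -(yPTP y) -/v H0 mul0mx.
set J := [set t | v 0 t != 0].
have J0 : J != set0.
  apply: contra nz => /eqP J0; apply/eqP/rowP => t; rewrite [RHS]mxE.
  apply/eqP; apply: contraT => vt; have : t \in J by rewrite inE.
  by rewrite J0 inE.
have JI : (#|J| <= l - 1)%N by rewrite -HI; apply: wt_yPT.
have := forallP sH J; rewrite /stopping_set J0 /= leqNgt.
have -> : (#|J| < l)%N by apply: leq_ltn_trans JI _; rewrite subn1 ltn_predL.
rewrite implybF negbK => /existsP[i' /eqP Hres].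
have := congr1 (fun M : 'M['F_2]_(1, m) => M 0 i') vH; rewrite !mxE F2_sum.
rewrite (_ : [set t | v 0 t * H^T t i' != 0] = [set j in J | H i' j != 0]).
  by rewrite Hres => /eqP; rewrite oner_eq0.
by apply/setP => t; rewrite !inE mulf_eq0 negb_or [H^T t i']mxE.
Qed.

End Ext.

Section Ext2.
Local Open Scope ring_scope.

Lemma extend n k d (C : {set 'rV['F_2]_n}) m l (H : 'M['F_2]_(m, n)) :
  is_code C k d -> (0 < l)%N -> (l - 1 <= n)%N ->
  rows_in (dual C) H -> stop_dist_ge H l ->
  exists r : nat, (r <= n - k + 1 - l)%N /\
    exists H' : 'M['F_2]_(r, n),
      rows_in (dual C) H' /\
      \rank (col_mx H H') = (n - k)%N /\
      parity_check C (col_mx H H') /\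
      stop_dist_ge (col_mx H H') l.
Proof.
move=> code l0 ln rH sH.
have HB : (H <= Bmat C)%MS.
  by apply/row_subP => i; rewrite -(dual_B C); exact: (forallP rH i).
set E := (Bmat C :\: H)%MS.
have eEH : (E + H :=: Bmat C)%MS.
  apply: eqmx_trans (addsmx_diff_cap_eq (Bmat C) H).
  by apply: adds_eqmx => //; apply/eqmx_sym/capmx_idPr.
have rE : (\rank E + \rank H)%N = (n - k)%N.
  by rewrite -mxrank_disjoint_sum ?capmx_diff // eEH (rank_Bmat code).
have rH' := rank_stop l0 sH ln.
exists (\rank E); split.
  move: rE rH' l0; move: (\rank E) (\rank H) => a b rE /leP h1 /leP h2.
  apply/leP; rewrite -!plusE -!minusE in rE h1 h2 *; lia.
exists (row_base E).
have e : (col_mx H (row_base E) :=: Bmat C)%MS.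
  apply: eqmx_trans (eqmx_sym (addsmxE _ _)) _.
  apply: eqmx_trans (adds_eqmx (eqmx_refl H) (eq_row_base E)) _.
  by rewrite addsmxC.
split.
  apply/forallP => i; rewrite (dual_B C); apply: submx_trans (row_sub i _) _.
  by rewrite eq_row_base diffmxSl.
split; first by rewrite e (rank_Bmat code).
split; first by move=> v; rewrite (dual_B C) e.
apply/forallP => I; apply/implyP => /andP[I0 nres].
apply: (implyP (forallP sH I)); rewrite /stopping_set I0 /=.
apply: contra nres => /existsP[i Hi]; apply/existsP; exists (lshift _ i).
rewrite (_ : [set j in I | _] = [set j in I | H i j != 0]) //.
by apply/setP => j; rewrite !inE col_mxEu.
Qed.

End Ext2.

Section RealHelpers.
Local Open Scope R_scope.

Lemma real_core (q a S : R) (m : nat) : 0 < q < 1 -> 0 < a < 1 -> 0 <= S ->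
  INR m >= (ln a + S * ln (1 - a)) / ln q -> q ^ m <= a.
Proof.
intros [q0 q1] [a0 a1] S0 Hm.
assert (lq : ln q < 0) by (rewrite -ln_1; apply ln_increasing; lra).
assert (la : ln (1 - a) < 0) by (rewrite -ln_1; apply ln_increasing; lra).
assert (HS : S * ln (1 - a) <= 0) by nra.
assert (H1 : (ln a + S * ln (1 - a)) / ln q >= ln a / ln q).
{ unfold Rdiv. apply Rle_ge.
  assert (iq : / ln q < 0) by (apply Rinv_lt_0_compat; exact lq).
  nra. }
assert (H2 : INR m * ln q <= ln a).
{ assert (H3 : INR m >= ln a / ln q) by lra.
  assert (H4 : ln a / ln q * ln q = ln a) by (field; lra).
  rewrite -H4. nra. }
rewrite -ln_pow in H2; last lra.
destruct (Rle_or_lt (q ^ m) a) as [H|H]; auto.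
exfalso. apply ln_increasing in H; [lra|exact a0].
Qed.

Lemma real_final (Dm y x b N eps q : R) (m : nat) :
  0 < Dm -> 0 < y -> q = x / y -> y ^ m * b <= N * (x ^ m * Dm) ->
  N * q ^ m <= eps -> (Dm - b) / Dm >= 1 - eps.
Proof.
intros D0 y0 Hq Hb Hq2.
assert (ym : 0 < y ^ m) by (apply pow_lt; lra).
assert (Hqm : q ^ m * y ^ m = x ^ m).
{ rewrite Hq -Rpow_mult_distr. unfold Rdiv.
  rewrite Rmult_assoc Rinv_l; [by rewrite Rmult_1_r | lra]. }
assert (Hb2 : b <= eps * Dm).
{ apply Rmult_le_reg_l with (y ^ m); auto.
  apply Rle_trans with (N * (x ^ m * Dm)); auto.
  rewrite -Hqm.
  assert (0 <= Dm) by lra.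
  assert (E0 : N * (q ^ m * y ^ m * Dm) = (N * q ^ m) * (y ^ m * Dm)) by ring.
  rewrite E0.
  assert (E1 : y ^ m * (eps * Dm) = eps * (y ^ m * Dm)) by ring.
  rewrite E1. apply Rmult_le_compat_r; auto. nra. }
apply Rle_ge. unfold Rdiv.
apply Rmult_le_reg_r with Dm; auto.
rewrite Rmult_assoc Rinv_l; lra.
Qed.
Lemma INR_muln a b : INR (a * b)%N = INR a * INR b.
Proof. by rewrite -multE mult_INR. Qed.

Lemma INR_expn a b : INR (a ^ b)%N = INR a ^ b.
Proof. elim: b => [|b IH]; first by rewrite expn0. by rewrite expnS INR_muln IH. Qed.

Lemma INR_addn a b : INR (a + b)%N = INR a + INR b.
Proof. by rewrite -plusE plus_INR. Qed.

Lemma INR_sum a b (f : nat -> nat) :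
  INR (\sum_(a <= j < b) f j)%N = rsum a b (fun j => INR (f j)).
Proof.
rewrite /rsum; apply: (big_morph INR) => //.
exact: INR_addn.
Qed.

Lemma rsum_ge0 a b (f : nat -> R) : (forall j, (a <= j < b)%N -> 0 <= f j) ->
  0 <= rsum a b f.
Proof.
move=> H; rewrite /rsum big_seq; apply: (big_ind (fun x => 0 <= x)).
- by apply: Rle_refl.
- by move=> x y; apply: Rplus_le_le_0_compat.
- by move=> j; rewrite mem_index_iota; apply: H.
Qed.

End RealHelpers.

Lemma bin_gap n j : (1 <= j)%N -> (j <= n)%N -> ('C(n - j, j) + 1 <= 'C(n, j))%N.
Proof.
case: n => [|n'] j1 jn; first by move: j1 jn; case: j.
case: j j1 jn => [//|j'] _ jn.
rewrite binS; apply: leq_add.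
  by apply: leq_bin2l; rewrite subSS leq_subr.
by rewrite bin_gt0.
Qed.

Unset Implicit Arguments.
Open Scope R_scope.

Theorem theorem5 (n k d : nat) (C : {set 'rV['F_2]_n}) (l : nat) (eps : R) (m : nat) :
  is_code C k d ->
  (2 <= l)%N -> (l <= (d + 1)./2)%N ->
  0 < eps < 1 ->
  (0 < m)%N ->
  let N := rsum 1 l (fun j => INR 'C(n, j)) in
  INR m >= (ln (eps / N)
            + rsum 1 l (fun j => INR 'C(n, j) - INR 'C(n - j, j) - 1)
              * ln (1 - eps / N))
           / ln (1 - INR (l - 1) / 2 ^ (l - 1)) ->
  INR (good_count m C l) / INR (#|dual C| ^ m) >= 1 - eps /\
  (forall H : 'M['F_2]_(m, n),
     rows_in (dual C) H -> stop_dist_ge H l ->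
     exists r : nat, (r <= n - k + 1 - l)%N /\
       exists H' : 'M['F_2]_(r, n),
         rows_in (dual C) H' /\
         \rank (col_mx H H') = (n - k)%N /\
         parity_check C (col_mx H H') /\
         stop_dist_ge (col_mx H H') l).
Proof.
move=> code Hl Hld [e0 e1] Hm N Hineq.
have dn : (d <= n)%N.
  case: code => _ _ _ [c _ [_ <-]] _; rewrite /wt.
  by apply: leq_trans (max_card _) _; rewrite card_ord.
have Hld' : (l - 1 < d)%N.
  move: Hld; rewrite geq_half_double -mul2n => /leP H2; apply/leP.
  move/leP: Hl => Hl'; rewrite -?minusE -?multE -?plusE in H2 Hl' *; lia.
have lnn : (l - 1 <= n)%N by apply: ltnW (leq_trans Hld' dn).
split; last first.
  by move=> H rH sH; apply: (extend code (ltnW Hl) lnn rH sH).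
set D := #|dual C|.
have D0 : (0 < D)%N by rewrite /D (card_dual code) expn_gt0.
have Hg : (good_count m C l + #|bad C l m| = D ^ m)%N.
  rewrite /good_count /bad /D -(card_rows m (dual C)) -!sum1_card.
  rewrite [RHS](bigID (fun H => stop_dist_ge H l)) /=.
  by congr (_ + _)%N; apply: eq_bigl => H; rewrite !inE /rows_in.
have HB := bad_bound code Hl Hld' Hm.
set L := (l - 1)%N in Hineq HB *.
have L1 : (1 <= L)%N by rewrite /L subn_gt0.
have LM : (L < 2 ^ L)%N by apply: ltn_expl.
have LMr : 0 < INR L < 2 ^ L.
  split; first by apply: lt_0_INR; apply/ltP.
  have := lt_INR _ _ (ltP LM); rewrite INR_expn.
  by rewrite (_ : INR 2 = 2) //; simpl; ring.
have M0 : 0 < 2 ^ L by apply: pow_lt; lra.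
set q := 1 - INR L / 2 ^ L in Hineq *.
have Hq : q = INR (2 ^ L - L)%N / INR (2 ^ L)%N.
  rewrite -minusE minus_INR; last by apply/leP; apply: ltnW.
  rewrite INR_expn (_ : INR 2 = 2); last by simpl; ring.
  by rewrite /q; field; lra.
have Hq01 : 0 < q < 1.
  have H1 : INR L / 2 ^ L < 1.
    apply: (Rmult_lt_reg_r (2 ^ L)) => //.
    by rewrite /Rdiv Rmult_assoc Rinv_l; lra.
  have H2 : 0 < INR L / 2 ^ L by apply: Rdiv_lt_0_compat; lra.
  rewrite /q; lra.
set Ns := (\sum_(1 <= j < l) 'C(n, j))%N in HB.
have HN : N = INR Ns by rewrite /N /Ns INR_sum.
have Ns1 : (1 <= Ns)%N.
  rewrite /Ns big_ltn // bin1; apply: leq_trans (leq_addr _ _).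
  by apply: (leq_trans _ dn); apply: (leq_ltn_trans (leq0n _) Hld').
have N1 : 1 <= N.
  by rewrite HN (_ : 1 = INR 1) //; apply: le_INR; apply/leP.
have Hepsn : 0 < eps / N < 1.
  split; first by apply: Rdiv_lt_0_compat; lra.
  apply: (Rmult_lt_reg_r N); first lra.
  by rewrite /Rdiv Rmult_assoc Rinv_l; lra.
have S0 : 0 <= rsum 1 l (fun j => INR 'C(n, j) - INR 'C(n - j, j) - 1).
  apply: rsum_ge0 => j /andP[j1 jl].
  have jn : (j <= n)%N.
    apply: (leq_trans _ dn); apply: ltnW; apply: (leq_ltn_trans _ Hld').
    by rewrite /L leq_subRL ?add1n // ltnW.
  have Hb : ('C(n - j, j) + 1 <= 'C(n, j))%N.
    exact: bin_gap.
  have := le_INR _ _ (leP Hb); rewrite INR_addn /=; lra.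
have Hqm := real_core Hq01 Hepsn S0 Hineq.
have HNq : N * q ^ m <= eps.
  have E : N * (eps / N) = eps by field; lra.
  have : N * q ^ m <= N * (eps / N) by apply: Rmult_le_compat_l; lra.
  by rewrite E.
have -> : good_count m C l = (D ^ m - #|bad C l m|)%N by rewrite -Hg addnK.
rewrite -minusE minus_INR; last by apply/leP; rewrite -Hg leq_addl.
apply: (real_final (y := INR (2 ^ L)%N) (x := INR (2 ^ L - L)%N) (N := N) (q := q) (m := m)).
- by apply: lt_0_INR; apply/ltP; rewrite expn_gt0 D0.
- by apply: lt_0_INR; apply/ltP; rewrite expn_gt0.
- exact: Hq.
- have := le_INR _ _ (leP HB).
  rewrite !INR_muln -HN !(INR_expn _ m) INR_muln Rpow_mult_distr.
  by [].
- exact: HNq.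
Qed.
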